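(* Let $p$ be an odd prime, $\alpha>1$ an integer with $\gcd(p,\alpha)=1$, $\gamma=\operatorname{ord}_p(\alpha)$, and let $n\ge1$, $s\geq 0$, $t\geq 1$ be integers. Then $$S_p^n(s\gamma p^t)\leq 2 s\gamma\, t^{n-1}\left(\frac{p+1}{2}\right)^t .$$
   Context: A base-$p$ digit $d\in\{0,\dots,p-1\}$ is called small if $d<p/2$ and large otherwise. For integers $a,n\ge1$, $S_p^n(a)=\#\{0\le s<a : \text{the base-}p\text{ representation of }\alpha^s\text{ contains fewer than } n \text{ large digits}\}$ (this depends on the fixed $\alpha$). *)

(* Defs.v *)
From mathcomp Require Import all_boot all_order all_algebra.
Set Implicit Arguments. Unset Strict Implicit. Unset Printing Implicit Defensive.

(* Base-p digits of m, least significant first; [::] for m = 0.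
   The fuel m suffices since each step divides by p >= 2. *)
Fixpoint digits_aux (p fuel m : nat) : seq nat :=
  if fuel is k.+1 then
    if m == 0 then [::] else (m %% p) :: digits_aux p k (m %/ p)
  else [::].
Definition digits (p m : nat) : seq nat := digits_aux p m m.

Definition large_digit (p d : nat) : bool := p <= 2 * d.

Definition num_large (p m : nat) : nat := count (large_digit p) (digits p m).

Definition S_count (p alpha n a : nat) : nat :=
  count (fun s => num_large p (alpha ^ s) < n) (iota 0 a).

(* multiplicative order of alpha mod p: least k >= 1 with alpha^k = 1 (mod p);
   for p prime and gcd(alpha,p)=1 it is < p, so searching 1..p suffices. *)
Definition ordp (p alpha : nat) : nat :=
  head 0 [seq k <- iota 1 p | alpha ^ k == 1 %[mod p]].

(* Main.v *)
Require Import Defs.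
From mathcomp Require Import all_boot all_order all_algebra ring zify.

Definition digit (p i m : nat) : nat := m %/ p ^ i %% p.

Lemma large0 p : 0 < p -> large_digit p 0 = false.
Proof. by rewrite /large_digit muln0 leqn0 => /lt0n_neq0 /negbTE. Qed.

Lemma digit_aux_bound p f m K : 1 < p -> m <= f ->
  count (fun i => large_digit p (digit p i m)) (iota 0 K)
  <= count (large_digit p) (digits_aux p f m).
Proof.
move=> p1; elim: f m K => [|f IH] m K.
  rewrite leqn0 => /eqP ->; rewrite /= (eq_count (a2 := pred0)) ?count_pred0 //.
  by move=> i; rewrite /digit div0n mod0n large0 // ltnW.
move=> mf /=; case: eqP => [->|/eqP m0].
  rewrite (eq_count (a2 := pred0)) ?count_pred0 //.
  by move=> i; rewrite /digit div0n mod0n large0 // ltnW.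
case: K => [|K] //=.
rewrite /digit expn0 divn1 leq_add2l.
have -> : iota 1 K = map S (iota 0 K) by rewrite -(iotaDl 1).
rewrite count_map.
apply: leq_trans (IH _ _ _); last first.
  rewrite -ltnS; apply: leq_trans mf; rewrite ltn_Pdiv // lt0n //.
apply: eq_leq; apply: eq_count => i /=.
by rewrite /digit expnS divnMA.
Qed.

Lemma digit_bound p m v t : 1 < p ->
  count (fun i => large_digit p (digit p i m)) (iota v t) <= num_large p m.
Proof.
move=> p1; rewrite /num_large /digits; apply: leq_trans (@digit_aux_bound p m m (v + t) p1 (leqnn m)).
by rewrite iotaD count_cat leq_addl.
Qed.
Lemma digit_low p i K A W : 0 < p -> i < K -> digit p i (A + p ^ K * W) = digit p i A.
Proof.
move=> p0 iK; have [j ->] : exists j, K = i + j.+1 by exists (K - i.+1); rewrite addnS -addSn subnKC.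
rewrite /digit.
have -> : A + p ^ (i + j.+1) * W = (p ^ j * W * p) * p ^ i + A.
  by rewrite expnD expnS; ring.
by rewrite divnMDl ?expn_gt0 ?p0 // modnMDl.
Qed.

Lemma digit_top p K A B Z : 0 < p ->
  digit p K (A + p ^ K * B + p ^ K.+1 * Z) = (digit p K A + B) %% p.
Proof.
move=> p0; rewrite /digit.
have -> : A + p ^ K * B + p ^ K.+1 * Z = (Z * p + B) * p ^ K + A.
  by rewrite expnS; ring.
rewrite divnMDl ?expn_gt0 ?p0 // -addnA modnMDl modnDml addnC.
done.
Qed.
Lemma binom2 a m : exists R, (1 + a) ^ m = 1 + m * a + 'C(m, 2) * a ^ 2 + a ^ 3 * R.
Proof.
elim: m => [|m [R IH]]; first by exists 0; rewrite expn0 mul0n bin0n mul0n muln0 !addn0.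
exists ('C(m, 2) + R + a * R).
rewrite expnSr IH binS bin1; ring.
Qed.

Lemma lte p alpha g v u : prime p -> odd p -> 0 < v -> coprime p u ->
  alpha ^ g = 1 + p ^ v * u ->
  forall i, exists x, coprime p x /\ alpha ^ (g * p ^ i) = 1 + p ^ (v + i) * x.
Proof.
move=> pp op v0 cu hg; elim=> [|i [x [cx IH]]].
  by exists u; rewrite expn0 muln1 addn0.
have [R HR] := binom2 (p ^ (v + i) * x) p.
have [w hw] : exists w, v + i = w.+1 by exists (v + i).-1; rewrite prednK // addn_gt0 v0.
have hC : 'C(p, 2) = p * p.-1./2 by rewrite bin2odd.
set c := p.-1./2 in hC.
exists (x + p * (p ^ w * x ^ 2 * c + p ^ (w + w) * x ^ 3 * R)); split.
  by rewrite /coprime addnC mulnC gcdnMDl.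
rewrite expnS (mulnC p) mulnA expnM IH HR hC addnS hw.
rewrite !expnS !expnD; ring.
Qed.

Lemma form p alpha g K x : 0 < K -> alpha ^ g = 1 + p ^ K * x ->
  forall k m, exists Z, alpha ^ (k + g * m) = alpha ^ k + p ^ K * (alpha ^ k * (m * x)) + p ^ K.+1 * Z.
Proof.
move=> K0 hg k m.
have [R HR] := binom2 (p ^ K * x) m.
have [w hw] : exists w, K = w.+1 by exists K.-1; rewrite prednK.
exists (alpha ^ k * (p ^ w * x ^ 2 * ('C(m, 2) + p ^ w.+1 * x * R))).
rewrite expnD expnM hg HR hw !expnS; ring.
Qed.
Lemma sum_const_seq (s : seq nat) c : \sum_(i <- s) c = size s * c.
Proof. by elim: s => [|x s IH]; rewrite ?big_nil ?big_cons ?IH ?mulSn. Qed.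

Lemma perm_aff p D B : 0 < p -> coprime p B ->
  perm_eq [seq (D + B * m) %% p | m <- iota 0 p] (iota 0 p).
Proof.
move=> p0 cB.
have inj : {in iota 0 p &, injective (fun m => (D + B * m) %% p)}.
  move=> m1 m2; rewrite !mem_iota !add0n => /andP[_ h1] /andP[_ h2] /eqP.
  rewrite eqn_modDl.
  wlog le: m1 m2 h1 h2 / m2 <= m1.
    move=> H; case: (leqP m2 m1) => [l|l] e; first exact: H.
    by apply/esym/H => //; [exact: ltnW | rewrite eq_sym].
  rewrite eqn_mod_dvd ?leq_mul2l ?le ?orbT // -mulnBr Gauss_dvdr //.
  move=> d; apply/eqP; rewrite eqn_leq le andbT -subn_eq0.
  case: (posnP (m1 - m2)) => // pos; move: (dvdn_leq pos d).
  by rewrite leqNgt (leq_ltn_trans (leq_subr _ _) h1).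
have U : uniq [seq (D + B * m) %% p | m <- iota 0 p] by rewrite map_inj_in_uniq ?iota_uniq.
apply: uniq_perm => //; first exact: iota_uniq.
have H1 : {subset [seq (D + B * m) %% p | m <- iota 0 p] <= iota 0 p}.
  by move=> y /mapP[m _ ->]; rewrite mem_iota add0n ltn_mod p0.
have H2 : size (iota 0 p) <= size [seq (D + B * m) %% p | m <- iota 0 p] by rewrite size_map.
by have [_] := uniq_min_size U H1 H2.
Qed.

Lemma sum_perm_aff p D B (F : nat -> nat) : 0 < p -> coprime p B ->
  \sum_(m <- iota 0 p) F ((D + B * m) %% p) = \sum_(d <- iota 0 p) F d.
Proof.
move=> p0 cB.
have := perm_big (op := addn) (x := 0) (P := xpredT) (F := F) _ (perm_aff p D B p0 cB).
by rewrite big_map => <-.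
Qed.

Lemma small_sum p h c n : p = h.*2.+1 ->
  \sum_(d <- iota 0 p) (c + large_digit p d < n.+1) = h.+1 * (c < n.+1) + h * (c < n).
Proof.
move=> hp.
have -> : iota 0 p = iota 0 h.+1 ++ iota h.+1 h by rewrite -iotaD hp addSn addnn.
rewrite big_cat; congr (_ + _).
  rewrite (eq_big_seq (fun _ => (c < n.+1) : nat)); last first.
    move=> d; rewrite mem_iota add0n ltnS => dh /=.
    have -> : large_digit p d = false by rewrite /large_digit hp -addnn; apply/negbTE; rewrite -ltnNge; lia.
    by rewrite addn0.
  by rewrite sum_const_seq size_iota.
rewrite (eq_big_seq (fun _ => (c < n) : nat)); last first.
  move=> d; rewrite mem_iota => /andP[dh _].
  have L : large_digit p d by rewrite /large_digit hp -addnn; lia.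
  by rewrite L addn1 ltnS.
by rewrite sum_const_seq size_iota.
Qed.

Lemma sum_block (F : nat -> nat) a L :
  \sum_(x <- iota 0 (a * L)) F x = \sum_(q <- iota 0 a) \sum_(r <- iota 0 L) F (q * L + r).
Proof.
elim: a => [|a IH]; first by rewrite mul0n !big_nil.
have -> : iota 0 a.+1 = iota 0 a ++ [:: a] by rewrite -addn1 iotaD.
rewrite mulSnr iotaD big_cat IH add0n big_cat big_seq1 /=.
by rewrite -{1}(addn0 (a * L)) iotaDl big_map.
Qed.

Definition cnt p alpha v t k :=
  count (fun i => large_digit p (digit p i (alpha ^ k))) (iota v t).

Fixpoint fcount (h t n : nat) : nat :=
  match t with
  | 0 => (0 < n)
  | t.+1 => match n with 0 => 0 | n.+1 => h.+1 * fcount h t n.+1 + h * fcount h t n end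
  end.

Lemma Ncount p h alpha g v : p = h.*2.+1 -> coprime p alpha ->
  (forall t, exists x, coprime p x /\ forall k m, exists Z,
     alpha ^ (k + g * p ^ t * m) = alpha ^ k + p ^ (v + t) * (alpha ^ k * (m * x)) + p ^ (v + t).+1 * Z) ->
  forall t n b, \sum_(r <- iota 0 (g * p ^ t)) (cnt p alpha v t (b + r) < n) = g * fcount h t n.
Proof.
move=> hp ca Hform; have p0 : 0 < p by rewrite hp.
elim=> [|t IH] n b.
  rewrite /cnt /= (eq_big_seq (fun _ => (0 < n) : nat)) //.
  by rewrite sum_const_seq size_iota expn0 muln1.
case: n => [|n].
  by rewrite muln0 big1_seq // => r _; rewrite ltn0.
have [x [cx Hx]] := Hform t.
rewrite expnS mulnCA sum_block exchange_big /=.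
set L := g * p ^ t.
have claim : forall r q, cnt p alpha v t.+1 (b + (q * L + r)) =
   cnt p alpha v t (b + r) + large_digit p ((digit p (v + t) (alpha ^ (b + r)) + (alpha ^ (b + r) * x) * q) %% p).
  move=> r q.
  have [Z HZ] := Hx (b + r) q.
  have -> : b + (q * L + r) = b + r + g * p ^ t * q by rewrite /L; ring.
  rewrite /cnt HZ -[t.+1]addn1 iotaD count_cat /= addn0; congr (_ + _).
    apply: eq_in_count => i; rewrite mem_iota => /andP[_ hi] /=.
    rewrite -addnA; set W := alpha ^ (b + r) * (q * x).
    have -> : p ^ (v + t) * W + p ^ (v + t).+1 * Z = p ^ (v + t) * (W + p * Z) by rewrite expnS; ring.
    by rewrite digit_low.
  by rewrite digit_top // (mulnC q) mulnA.
rewrite (eq_big_seq (fun r => h.+1 * (cnt p alpha v t (b + r) < n.+1) + h * (cnt p alpha v t (b + r) < n))); last first.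
  move=> r _ /=.
  under eq_bigr => q _ do rewrite claim.
  rewrite (sum_perm_aff p _ _ (fun d => cnt p alpha v t (b + r) + large_digit p d < n.+1)) //; first exact: small_sum.
  by rewrite coprimeMr cx andbT coprimeXr.
by rewrite big_split /= -!big_distrr /= !IH /=; ring.
Qed.
Lemma fbound h t n : fcount h t.+1 n.+1 <= 2 * t.+1 ^ n * h.+1 ^ t.+1.
Proof.
elim: t n => [|t IH] n.
  rewrite /= exp1n expn1 muln1; case: n => [|n] /=; lia.
case: n => [|n].
  have := IH 0; rewrite /= !expn0 !muln0 !addn0 !muln1 [h.+1 ^ t.+2]expnS; set A := (_ + _ * _); move=> I; rewrite [2 * _]mulnCA leq_mul2l; apply/orP; right. exact: I.
have I1 := IH n.+1; have I2 := IH n.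
have XY : t.+1 ^ n <= t.+2 ^ n by elim: (n) => // k IHk; rewrite !expnS leq_mul.
move: I1 I2 XY; rewrite /=.
rewrite !expnS.
set X := t.+1 ^ n; set Y := t.+2 ^ n; set H := h.+1 ^ t.
set A' := h.+1 * fcount h t n.+2 + h * fcount h t n.+1.
set A := fcount h t.+1 n.+1 => I1 I2 XY.
have e1 : h.+1 * A' <= h.+1 * (2 * (t.+1 * X) * (h.+1 * H)) by rewrite leq_mul2l I1 orbT.
have e2 : h * A <= h.+1 * (2 * X * (h.+1 * H)) by apply: leq_mul.
apply: leq_trans (leq_add e1 e2) _.
have -> : h.+1 * (2 * (t.+1 * X) * (h.+1 * H)) + h.+1 * (2 * X * (h.+1 * H))
   = (2 * (h.+1 * (h.+1 * H))) * (t.+2 * X) by ring.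
have -> : 2 * (t.+2 * Y) * (h.+1 * (h.+1 * H)) = (2 * (h.+1 * (h.+1 * H))) * (t.+2 * Y) by ring.
by rewrite leq_mul2l leq_mul2l XY !orbT.
Qed.

Lemma count_sum_nat (P : pred nat) s : count P s = \sum_(x <- s) (P x : nat).
Proof. by elim: s => [|y s IH]; rewrite ?big_nil ?big_cons //= IH. Qed.

Lemma main_nat p alpha n s t : prime p -> odd p -> 1 < alpha -> coprime p alpha ->
  0 < ordp p alpha ->
  S_count p alpha n (s * ordp p alpha * p ^ t) <= s * (ordp p alpha * fcount (p./2) t n).
Proof.
move=> pp op a1 cpa.
set g := ordp p alpha => gn0.
have [g1 hg] : 0 < g /\ alpha ^ g == 1 %[mod p].
  move: gn0; rewrite /g /ordp.
  have : all (fun k => (0 < k) && (alpha ^ k == 1 %[mod p])) [seq k <- iota 1 p | alpha ^ k == 1 %[mod p]].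
    by apply/allP => k; rewrite mem_filter mem_iota => /andP[-> /andP[k1 _]]; rewrite andbT.
  by case: [seq _ <- _ | _] => [|y l] //= /andP[/andP[-> ->] _].
have p1 := prime_gt1 pp.
set h := p./2.
have hp : p = h.*2.+1 by rewrite -[LHS]odd_double_half op.
have a0 : 0 < alpha by exact: ltnW.
have ag1 : 1 < alpha ^ g.
  by apply: leq_trans a1 _; rewrite -{1}(expn1 alpha); apply: leq_pexp2l.
have n0pos : 0 < alpha ^ g - 1 by rewrite subn_gt0.
have pdiv : p %| alpha ^ g - 1 by rewrite -eqn_mod_dvd // ltnW.
have [u cu hn0] := pfactor_coprime pp n0pos.
set v := logn p (alpha ^ g - 1) in hn0.
have v0 : 0 < v by rewrite /v logn_gt0 mem_primes pp n0pos pdiv.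
have hgv : alpha ^ g = 1 + p ^ v * u.
  by rewrite -(subnK (ltnW ag1)) hn0 mulnC addnC.
have Hform : forall t, exists x, coprime p x /\ forall k m, exists Z,
     alpha ^ (k + g * p ^ t * m) = alpha ^ k + p ^ (v + t) * (alpha ^ k * (m * x)) + p ^ (v + t).+1 * Z.
  move=> t'; have [x [cx hx]] := lte p alpha g v u pp op v0 cu hgv t'.
  exists x; split => // k m.
  have K0 : 0 < v + t' by rewrite addn_gt0 v0.
  exact: form p alpha (g * p ^ t') (v + t') x K0 hx k m.
have NC := Ncount p h alpha g v hp cpa Hform.
rewrite /S_count.
apply: (leq_trans (sub_count (a2 := fun k => cnt p alpha v t k < n) _ _)).
  move=> k /= H; apply: leq_ltn_trans H; exact: digit_bound.
rewrite count_sum_nat -mulnA sum_block.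
rewrite (eq_big_seq (fun _ => g * fcount h t n)); first by rewrite sum_const_seq size_iota.
by move=> q _; rewrite NC.
Qed.

Import Order.TTheory GRing.Theory Num.Theory.
Local Open Scope ring_scope.

Theorem lemma2p8 (p alpha n s t : nat) :
  prime p -> odd p -> (1 < alpha)%N -> coprime p alpha ->
  (1 <= n)%N -> (1 <= t)%N ->
  ((S_count p alpha n (s * ordp p alpha * p ^ t)%N)%:R : rat)
    <= 2 * s%:R * (ordp p alpha)%:R * (t%:R) ^+ (n.-1)
       * ((p.+1)%:R / 2) ^+ t.
Proof.
move=> pp op a1 cpa n1 t1.
case: (posnP (ordp p alpha)) => [g0 | gn0].
  by rewrite g0 muln0 mul0n /S_count /= mulr0 !mul0r.
have M := main_nat p alpha n s t pp op a1 cpa gn0.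
set h := p./2 in M.
have hp : p = h.*2.+1 by rewrite -[LHS]odd_double_half op.
case: n n1 M => [//|n] _ M; case: t t1 M => [//|t] _ M.
have FB := fbound h t n.
apply: (le_trans (_ : _ <= ((s * (ordp p alpha * (2 * t.+1 ^ n * h.+1 ^ t.+1)))%N)%:R)).
  rewrite ler_nat; apply: leq_trans M _.
  by rewrite leq_mul2l leq_mul2l FB !orbT.
have -> : ((p.+1)%:R / 2 : rat) = h.+1%:R.
  by rewrite hp -doubleS -muln2 natrM mulfK.
rewrite !natrM !natrX /=.
rewrite le_eqVlt; apply/orP; left; apply/eqP; ring.
Qed.
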